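(* Let $m\ge3$, $E=\mathbb{Q}(\zeta_m)$, $K=\mathbb{Q}(\zeta_m+\zeta_m^{-1})$, and let $(L,h)$ be a hermitian $\mathcal{O}_E$-lattice with trace lattice $(L,b,f)$. Then $$s(L,b)=\mathrm{Tr}^E_\mathbb{Q}(\mathfrak{s}(L,h))\quad\text{and}\quad n(L,b)=2\,\mathrm{Tr}^K_\mathbb{Q}(\mathfrak{n}(L,h)).$$
   Context: $\mathcal{O}_E=\mathbb{Z}[\zeta_m]$, $\iota$ is complex conjugation on $E$ with fixed field $K$. A hermitian $\mathcal{O}_E$-lattice is a finitely generated projective $\mathcal{O}_E$-module $L$ with a nondegenerate $\iota$-sesquilinear form $h$ on $L\otimes E$. Its trace lattice is $L$ with the symmetric bilinear form $b=\mathrm{Tr}^E_\mathbb{Q}\circ h$ and $f$ = multiplication by $\zeta_m$. For a $\mathbb{Z}$-lattice, $s(L,b)=b(L,L)$ and $n(L,b)=\sum_{x\in L}b(x,x)\mathbb{Z}$; for the hermitian lattice, $\mathfrak{s}(L,h)=h(L,L)$ (a fractional $\mathcal{O}_E$-ideal) and $\mathfrak{n}(L,h)$ is the fractional $\mathcal{O}_K$-ideal generated by the $h(x,x)$, $x\in L$. The trace of a fractional ideal is the $\mathbb{Z}$-module generated by the traces of its elements. *)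

(* Defs.v *)
From HB Require Import structures.
From mathcomp Require Import all_boot all_order all_algebra all_field.
Set Implicit Arguments. Unset Strict Implicit. Unset Printing Implicit Defensive.
Import GRing.Theory.
Local Open Scope ring_scope.

(* E is an abstract number field over rat (a splitting field
   type) generated by a primitive m-th root of unity z, i.e. E = Q(zeta_m). *)

Section Defs.
Variable E : splittingFieldType rat.

Definition OE (z : E) : E -> Prop := fun x : E =>
  exists p : {poly int}, x = (map_poly intr p).[z].

Definition OK (z : E) : E -> Prop := fun x : E =>
  exists p : {poly int}, x = (map_poly intr p).[z + z^-1].

Definition zspan (S : E -> Prop) : E -> Prop := fun x =>
  exists (r : nat) (v : 'I_r -> E) (c : 'I_r -> int),
    (forall i, S (v i)) /\ x = \sum_(i < r) v i *~ c i.

Definition rspan (R : E -> Prop) (S : E -> Prop) : E -> Prop := fun x =>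
  exists (r : nat) (v : 'I_r -> E) (c : 'I_r -> E),
    (forall i, S (v i)) /\ (forall i, R (c i)) /\ x = \sum_(i < r) c i * v i.

Definition imgset (f : E -> E) (S : E -> Prop) : E -> Prop := fun y =>
  exists x, S x /\ y = f x.

Definition inLat (z : E) (k n : nat) (B : 'M[E]_(k, n)) (x : 'rV[E]_n) : Prop :=
  exists c : 'rV[E]_k, (forall j, OE z (c 0 j)) /\ x = c *m B.

Definition hform (iota : gal_of {:E}) (n : nat) (G : 'M[E]_n)
  (x y : 'rV[E]_n) : E := (x *m G *m (map_mx iota y)^T) 0 0.

Definition trEQ (a : E) : E := galTrace 1%VS {:E} a.
Definition trKQ (z : E) (a : E) : E := galTrace 1%VS <<1; z + z^-1>>%VS a.

Definition bform iota n G (x y : 'rV[E]_n) : E := trEQ (hform iota G x y).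

Definition scaleZ z iota k n (B : 'M[E]_(k, n)) G : E -> Prop :=
  zspan (fun t => exists x y, inLat z B x /\ inLat z B y /\ t = bform iota G x y).
Definition normZ z iota k n (B : 'M[E]_(k, n)) G : E -> Prop :=
  zspan (fun t => exists x, inLat z B x /\ t = bform iota G x x).

Definition scaleH z iota k n (B : 'M[E]_(k, n)) G : E -> Prop :=
  rspan (OE z) (fun t => exists x y, inLat z B x /\ inLat z B y /\ t = hform iota G x y).
Definition normH z iota k n (B : 'M[E]_(k, n)) G : E -> Prop :=
  rspan (OK z) (fun t => exists x, inLat z B x /\ t = hform iota G x x).

Definition trIdeal (tr : E -> E) (I : E -> Prop) : E -> Prop := zspan (imgset tr I).

End Defs.

(* Main.v *)
Require Import Defs.
From HB Require Import structures.
From mathcomp Require Import all_boot all_order all_algebra all_field all_fingroup all_solvable.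
From mathcomp Require Import ring.
Import GRing.Theory.
Local Open Scope ring_scope.

Section Gal.
Variable E : splittingFieldType rat.
Variables (m : nat) (z : E) (iota : gal_of {:E}).
Hypotheses (m2 : (2 < m)%N) (prim : m.-primitive_root z)
  (gen : <<1; z>>%VS = fullv) (iz : iota z = z^-1).

Lemma z_neq0 : z != 0.
Proof.
apply/eqP => z0; have := prim_expr_order prim; rewrite z0 expr0n.
by case: m m2 => // n _ /eqP; rewrite eq_sym oner_eq0.
Qed.

Lemma zinv_neq : z^-1 != z.
Proof.
apply/eqP => h; have : z ^+ 2 == 1 by rewrite expr2 -{1}h mulVf ?z_neq0.
rewrite -(prim_order_dvd prim) => /dvdn_leq le; by move: m2; rewrite ltnNge le.
Qed.

Lemma gal1 (x : gal_of {:E}) : x \in 'Gal({:E} / 1)%g.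
Proof.
have : [set x] \subset 'Gal({:E} / 1)%g by rewrite galois_connection ?sub1v.
by rewrite sub1set.
Qed.

Lemma gal_eqz (x y : gal_of {:E}) : x z = y z -> x = y.
Proof.
move=> xy; apply/eqP/gal_eqP => a _.
have : a \in <<1; z>>%VS by rewrite gen memvf.
case/Fadjoin_polyP => p p1 ->.
rewrite -!horner_map /= !(fixedPoly_gal (sub1v _) (gal1 _) p1) xy.
done.
Qed.

Lemma galMf (x y : gal_of {:E}) a : (x * y)%g a = y (x a).
Proof. exact: (galM _ _ (memvf a)). Qed.

Lemma gVf (x : gal_of {:E}) a : x (a^-1) = (x a)^-1.
Proof. exact: fmorphV. Qed.
Lemma gDf (x : gal_of {:E}) a b : x (a + b) = x a + x b.
Proof. exact: rmorphD. Qed.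
Lemma gBf (x : gal_of {:E}) a b : x (a - b) = x a - x b.
Proof. exact: rmorphB. Qed.
Lemma gNf (x : gal_of {:E}) a : x (- a) = - x a.
Proof. exact: rmorphN. Qed.
Lemma gMf (x : gal_of {:E}) a b : x (a * b) = x a * x b.
Proof. exact: rmorphM. Qed.
Lemma gXf (x : gal_of {:E}) a n : x (a ^+ n) = x a ^+ n.
Proof. exact: rmorphXn. Qed.
Lemma g1f (x : gal_of {:E}) : x 1 = 1.
Proof. exact: rmorph1. Qed.
Lemma g0f (x : gal_of {:E}) : x 0 = 0.
Proof. exact: rmorph0. Qed.
Lemma gintf (x : gal_of {:E}) (n : int) : x (n%:~R) = n%:~R.
Proof. exact: rmorph_int. Qed.
Lemma geq0f (x : gal_of {:E}) a : (x a == 0) = (a == 0).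
Proof. exact: fmorph_eq0. Qed.

Lemma iotaK a : iota (iota a) = a.
Proof.
have h : (iota * iota)%g = 1%g.
  by apply: gal_eqz; rewrite galMf iz gVf iz invrK gal_id.
by rewrite -galMf h gal_id.
Qed.

Lemma gal_pow (x : gal_of {:E}) : exists i, x z = z ^+ i.
Proof.
have : (x z) ^+ m = 1 by rewrite -gXf (prim_expr_order prim) g1f.
by case/(prim_rootP prim) => i ->; exists i.
Qed.

Lemma gal_abelian : abelian 'Gal({:E} / 1)%g.
Proof.
apply/centsP => x _ y _; apply: gal_eqz; rewrite !galMf.
have [i hi] := gal_pow x; have [j hj] := gal_pow y.
by rewrite hi hj !gXf hi hj -!exprM mulnC.
Qed.

Lemma w_fixed : iota (z + z^-1) = z + z^-1.
Proof. by rewrite gDf gVf iz invrK addrC. Qed.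

Lemma Kf_fixed : (<<1; z + z^-1>>%AS <= fixedField [set iota])%VS.
Proof.
apply/FadjoinP; split; first exact: sub1v.
apply/fixedFieldP; first exact: memvf.
by move=> y; rewrite inE => /eqP ->; exact: w_fixed.
Qed.

Lemma iota_in : iota \in 'Gal({:E} / <<1; z + z^-1>>%AS)%g.
Proof.
have : [set iota] \subset 'Gal({:E} / <<1; z + z^-1>>%AS)%g.
  by rewrite galois_connection ?subvf // Kf_fixed.
by rewrite sub1set.
Qed.

Lemma iota_neq1 : iota != 1%g.
Proof.
apply: contraNneq zinv_neq => h; have := iz; rewrite h gal_id => <-.
done.
Qed.

Lemma GalK_eq : 'Gal({:E} / <<1; z + z^-1>>%AS)%g = [set 1%g; iota].
Proof.
apply/setP => y; rewrite !inE; apply/idP/idP; last first.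
  by case/orP => /eqP ->; [exact: group1 | exact: iota_in].
move=> yG.
have yw : y (z + z^-1) = z + z^-1.
  exact: (fixed_gal (subvf _) yG (memv_adjoin _ _)).
set t := y z in yw *.
have t0 : t != 0 by rewrite /t geq0f z_neq0.
have : (t - z) * (t - z^-1) = 0.
  rewrite gDf gVf -/t in yw.
  have -> : (t - z) * (t - z^-1) = t * t - t * (z + z^-1) + z * z^-1.
    by ring.
  by rewrite -yw mulfV ?z_neq0 // mulrDr mulfV //; ring.
move/eqP; rewrite mulf_eq0 => /orP[]; rewrite subr_eq0 => /eqP h.
  by apply/orP; left; apply/eqP; apply: gal_eqz; rewrite gal_id.
by apply/orP; right; apply/eqP; apply: gal_eqz; rewrite iz.
Qed.

Lemma card_GalK : #|'Gal({:E} / <<1; z + z^-1>>%AS)%g| = 2.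
Proof. by rewrite GalK_eq cards2 eq_sym iota_neq1. Qed.

Lemma galE : galois 1 {:E}%AS.
Proof.
apply/and3P; split; [exact: sub1v | | exact: normalFieldf].
apply/separableP => y _; apply: pcharf0_separable.
by move=> p; rewrite (pchar_lalg E) (Num.Theory.pchar_num rat).
Qed.

Lemma sKE : (1 <= <<1; z + z^-1>>%AS <= {:E}%AS)%VS.
Proof. by rewrite sub1v subvf. Qed.

Lemma galKE : galois <<1; z + z^-1>>%AS {:E}%AS.
Proof. exact: galoisS sKE galE. Qed.

Lemma fixK : fixedField 'Gal({:E} / <<1; z + z^-1>>%AS)%g = <<1; z + z^-1>>%VS.
Proof. by have := galKE; move/galois_fixedField. Qed.

Lemma fixed_inK a : iota a = a -> a \in <<1; z + z^-1>>%VS.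
Proof.
move=> ia; rewrite -fixK; apply/fixedFieldP; first exact: memvf.
by move=> y; rewrite GalK_eq !inE => /orP[] /eqP ->; rewrite ?gal_id.
Qed.

Lemma normK : normalField 1 <<1; z + z^-1>>%AS.
Proof.
have nG : ('Gal({:E} / <<1; z + z^-1>>%AS) <| 'Gal({:E} / 1))%g.
  by rewrite -sub_abelian_normal ?gal_abelian // galS // sub1v.
have := normal_fixedField_galois galE nG.
by rewrite fixK => /and3P[].
Qed.

Lemma tr_K a : a \in <<1; z + z^-1>>%VS -> trEQ a = 2 * trKQ z a.
Proof.
move=> Ka; rewrite /trEQ /trKQ /galTrace.
pose f := normalField_cast_morphism sKE normK.
have castE x : x \in 'Gal({:E} / 1)%g -> x a = f x a.
  by move=> xG; rewrite /f /= (normalField_cast_eq sKE normK xG Ka).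
rewrite (eq_bigr (fun x => f x a)); last by move=> x /castE.
rewrite (partition_big f (mem 'Gal(<<1; z + z^-1>>%AS / 1)%g)); last first.
  move=> x xG; rewrite -(normalField_img galE sKE normK); exact: mem_morphim.
rewrite big_distrr /=.
apply: eq_bigr => y yG.
rewrite (eq_bigr (fun _ => y a)); last by move=> x /andP[_ /eqP ->].
rewrite sumr_const.
rewrite -(normalField_img galE sKE normK) in yG.
case/morphimP: yG => x0 x0D _ ->.
have -> : #|[pred x | (x \in 'Gal({:E} / 1)%g) && (f x == f x0)]| = 2.
  rewrite -card_GalK -(normalField_ker sKE normK) -(card_rcoset _ x0).
  rewrite -(morphpre_set1 f x0D).
  by apply: eq_card => x; rewrite morphpreE !inE.
by rewrite mulr_natl.
Qed.


Lemma gsumf (x : gal_of {:E}) r (F : 'I_r -> E) :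
  x (\sum_(i < r) F i) = \sum_(i < r) x (F i).
Proof. exact: rmorph_sum. Qed.

Inductive zc (S : E -> Prop) : E -> Prop :=
| zc0 : zc S 0
| zcS v c x : S v -> zc S x -> zc S (v *~ c + x).

Inductive rc (R S : E -> Prop) : E -> Prop :=
| rc0 : rc R S 0
| rcS v c x : S v -> R c -> rc R S x -> rc R S (c * v + x).

Lemma zspanP S x : zspan S x <-> zc S x.
Proof.
split.
  case=> r [v [c [Sv ->]]]; elim: r v c Sv => [|r IH] v c Sv.
    by rewrite big_ord0; constructor.
  rewrite big_ord_recl; apply: zcS; first exact: Sv.
  exact: (IH (fun i => v (lift ord0 i)) (fun i => c (lift ord0 i))).
elim=> [|v c y Sv _ [r [vs [cs [Svs ->]]]]].
  by exists 0%N, (fun _ => 0), (fun _ => 0); split; [case | rewrite big_ord0].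
exists r.+1, (fun i => if unlift ord0 i is Some j then vs j else v).
exists (fun i => if unlift ord0 i is Some j then cs j else c); split.
  by move=> i; case: (unlift ord0 i).
rewrite big_ord_recl unlift_none; congr (_ + _).
by apply: eq_bigr => i _; rewrite liftK.
Qed.

Lemma rspanP R S x : rspan R S x <-> rc R S x.
Proof.
split.
  case=> r [v [c [Sv [Rc ->]]]]; elim: r v c Sv Rc => [|r IH] v c Sv Rc.
    by rewrite big_ord0; constructor.
  rewrite big_ord_recl; apply: rcS; [exact: Sv | exact: Rc |].
  exact: (IH (fun i => v (lift ord0 i)) (fun i => c (lift ord0 i))).
elim=> [|v c y Sv Rc _ [r [vs [cs [Svs [Rcs ->]]]]]].
  by exists 0%N, (fun _ => 0), (fun _ => 0); split; [case | split; [case|rewrite big_ord0]].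
exists r.+1, (fun i => if unlift ord0 i is Some j then vs j else v).
exists (fun i => if unlift ord0 i is Some j then cs j else c); split.
  by move=> i; case: (unlift ord0 i).
split; first by move=> i; case: (unlift ord0 i).
rewrite big_ord_recl unlift_none; congr (_ + _).
by apply: eq_bigr => i _; rewrite liftK.
Qed.

Lemma zc_add S x y : zc S x -> zc S y -> zc S (x + y).
Proof.
elim=> [|v c x' Sv _ IH] Zy; first by rewrite add0r.
by rewrite -addrA; apply: zcS => //; exact: IH.
Qed.

Lemma zc_mulz S x d : zc S x -> zc S (x *~ d).
Proof.
elim=> [|v c x' Sv _ IH]; first by rewrite mul0rz; constructor.
by rewrite mulrzDl -mulrzA; apply: zcS.
Qed.

Lemma zc_gen S v : S v -> zc S v.
Proof. by move=> Sv; rewrite -[v]addr0 -[v]mulr1z; apply: zcS => //; constructor. Qed.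

Lemma zc_mono (S T : E -> Prop) x : (forall v, S v -> T v) -> zc S x -> zc T x.
Proof. by move=> ST; elim=> [|v c y Sv _ IH]; constructor => //; exact: ST. Qed.

Lemma zc_idem S x : zc (zc S) x -> zc S x.
Proof.
by elim=> [|v c y Sv _ IH]; [constructor | apply: zc_add => //; apply: zc_mulz].
Qed.

Lemma trD (a b : E) : trEQ (a + b) = trEQ a + trEQ b.
Proof. exact: raddfD. Qed.
Lemma tr0 : trEQ (0 : E) = 0.
Proof. exact: raddf0. Qed.
Lemma trMz (a : E) c : trEQ (a *~ c) = trEQ a *~ c.
Proof. exact: raddfMz. Qed.

Lemma zc_imgTr S x : zc S x -> zc (imgset (@trEQ E) S) (trEQ x).
Proof.
elim=> [|v c y Sv _ IH]; first by rewrite tr0; constructor.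
by rewrite trD trMz; apply: zcS => //; exists v.
Qed.


Lemma OE_add a b : OE z a -> OE z b -> OE z (a + b).
Proof. by case=> p -> [q ->]; exists (p + q); rewrite rmorphD hornerD. Qed.
Lemma OE_mul a b : OE z a -> OE z b -> OE z (a * b).
Proof. by case=> p -> [q ->]; exists (p * q); rewrite rmorphM hornerM. Qed.
Lemma OE_int (n : int) : OE z n%:~R.
Proof. by exists n%:P; rewrite map_polyC hornerC. Qed.
Lemma OE_z : OE z z.
Proof. by exists 'X; rewrite map_polyX hornerX. Qed.
Lemma OE_1 : OE z 1.
Proof. by have := OE_int 1. Qed.
Lemma OE_X k : OE z (z ^+ k).
Proof.
elim: k => [|k IH]; first by rewrite expr0; exact: OE_1.
by rewrite exprS; apply: OE_mul => //; exact: OE_z.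
Qed.
Lemma zinvE : z^-1 = z ^+ m.-1.
Proof.
apply: (mulIf z_neq0); rewrite mulVf ?z_neq0 // -exprSr prednK.
  by rewrite (prim_expr_order prim).
by apply: leq_trans m2.
Qed.
Lemma OE_zinv : OE z z^-1.
Proof. by rewrite zinvE; exact: OE_X. Qed.

Lemma OE_ind (P : E -> Prop) :
  (forall n : int, P n%:~R) -> (forall a b, P a -> P b -> P (a + b)) ->
  (forall a, P a -> P (a * z)) -> forall a, OE z a -> P a.
Proof.
move=> Pi Pa Pz a [p ->]; elim/poly_ind: p => [|p c IH].
  by rewrite rmorph0 horner0; have := Pi 0; rewrite mulr0z.
rewrite rmorphD rmorphM /= map_polyX map_polyC hornerMXaddC.
by apply: Pa; [apply: Pz | apply: Pi].
Qed.

Lemma OE_iota a : OE z a -> OE z (iota a).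
Proof.
move: a; apply: (OE_ind (fun a => OE z (iota a))) => [n|a' b Ha Hb|a' Ha]; first by rewrite gintf; exact: OE_int.
  by rewrite gDf; exact: OE_add.
by rewrite gMf iz; apply: OE_mul => //; exact: OE_zinv.
Qed.

Lemma OK_repr c : OK z c -> exists (n : int) d, OE z d /\ c = n%:~R + d + iota d.
Proof.
case=> p ->; elim/poly_ind: p => [|p k [n [d [Od IH]]]].
  by exists 0, 0; split; [exact: (OE_int 0) | rewrite rmorph0 horner0 g0f !addr0].
rewrite rmorphD rmorphM /= map_polyX map_polyC hornerMXaddC /= IH.
exists k, (n%:~R * z + d * z + d * z^-1); split.
  apply: OE_add; [apply: OE_add|]; apply: OE_mul => //;
    by [exact: OE_int | exact: OE_z | exact: OE_zinv].
rewrite !gDf !gMf gintf iz gVf iz invrK.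
have zz : z * z^-1 = 1 by rewrite mulfV ?z_neq0.
ring.
Qed.

Lemma OK_fixed c : OK z c -> iota c = c.
Proof.
case/OK_repr => n [d [_ ->]].
by rewrite !gDf gintf iotaK; ring.
Qed.

Lemma OK_1 : OK z 1.
Proof. by exists 1; rewrite rmorph1 hornerC. Qed.

Lemma OE_1' : OE z 1.
Proof. exact: OE_1. Qed.


Variables (k n : nat) (B : 'M[E]_(k, n)) (G : 'M[E]_n).
Hypothesis hG : map_mx iota G = G^T.

Lemma inLat_scale a x : OE z a -> inLat z B x -> inLat z B (a *: x).
Proof.
move=> Oa [c [Oc ->]]; exists (a *: c); split; last by rewrite scalemxAl.
by move=> j; rewrite mxE; apply: OE_mul.
Qed.

Lemma inLat_add x y : inLat z B x -> inLat z B y -> inLat z B (x + y).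
Proof.
move=> [c [Oc ->]] [d [Od ->]]; exists (c + d); split; last by rewrite mulmxDl.
by move=> j; rewrite mxE; apply: OE_add.
Qed.

Lemma hformE x y : hform iota G x y =
  \sum_(j < n) (\sum_(i < n) x 0 i * G i j) * iota (y 0 j).
Proof. by rewrite /hform !mxE; apply: eq_bigr => j _; rewrite !mxE. Qed.

Lemma hformZl a x y : hform iota G (a *: x) y = a * hform iota G x y.
Proof.
rewrite !hformE mulr_sumr; apply: eq_bigr => j _; rewrite mulrA mulr_sumr.
by congr (_ * _); apply: eq_bigr => i _; rewrite mxE mulrA.
Qed.

Lemma hformZr b x y : hform iota G x (b *: y) = iota b * hform iota G x y.
Proof.
rewrite !hformE mulr_sumr; apply: eq_bigr => j _.
by rewrite mxE gMf mulrCA.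
Qed.

Lemma hformDl x1 x2 y :
  hform iota G (x1 + x2) y = hform iota G x1 y + hform iota G x2 y.
Proof.
rewrite !hformE -big_split; apply: eq_bigr => j _ /=; rewrite -mulrDl -big_split /=.
by congr (_ * _); apply: eq_bigr => i _; rewrite mxE mulrDl.
Qed.

Lemma hformDr x y1 y2 :
  hform iota G x (y1 + y2) = hform iota G x y1 + hform iota G x y2.
Proof.
rewrite !hformE -big_split; apply: eq_bigr => j _ /=.
by rewrite mxE gDf mulrDr.
Qed.

Lemma Gsym i j : iota (G i j) = G j i.
Proof. by move/matrixP: hG => /(_ i j); rewrite !mxE. Qed.

Lemma hform_sym x y : iota (hform iota G x y) = hform iota G y x.
Proof.
rewrite !hformE gsumf.
under eq_bigr do rewrite gMf gsumf iotaK mulr_suml.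
rewrite exchange_big /=; apply: eq_bigr => i _; rewrite mulr_suml.
by apply: eq_bigr => j _; rewrite gMf Gsym; ring.
Qed.


Local Notation Sn := (fun t => exists x, inLat z B x /\ t = hform iota G x x).

Lemma OK_mul_zc c x : OK z c -> inLat z B x -> zc Sn (c * hform iota G x x).
Proof.
case/OK_repr => nn [d [Od ->]] Lx.
set h := hform iota G x x.
have e : (nn%:~R + d + iota d) * h = nn%:~R * h +
   (hform iota G ((1 + d) *: x) ((1 + d) *: x) - h - hform iota G (d *: x) (d *: x)).
  rewrite !hformZl !hformZr -/h gDf g1f; ring.
rewrite e mulrzl; apply: zc_add; first by apply: zc_mulz; apply: zc_gen; exists x.
have Sh : zc Sn h by apply: zc_gen; exists x.
apply: zc_add; first apply: zc_add.
- apply: zc_gen; exists ((1 + d) *: x); split => //.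
  by apply: inLat_scale => //; apply: OE_add => //; exact: OE_1.
- by rewrite -mulrN1z; apply: zc_mulz.
- rewrite -mulrN1z; apply: zc_mulz; apply: zc_gen; exists (d *: x); split => //.
  exact: inLat_scale.
Qed.

Lemma rc_zc a : rc (OK z) Sn a -> zc Sn a.
Proof.
elim=> [|v c y [x [Lx ->]] Oc _ IH]; first by constructor.
by apply: zc_add => //; exact: OK_mul_zc.
Qed.

Lemma rc_fixed a : rc (OK z) Sn a -> iota a = a.
Proof.
elim=> [|v c y [x [Lx ->]] Oc _ IH]; first exact: g0f.
by rewrite gDf gMf OK_fixed // hform_sym IH.
Qed.

Lemma part1 t : scaleZ z iota B G t <-> trIdeal (@trEQ E) (scaleH z iota B G) t.
Proof.
rewrite /scaleZ /trIdeal !zspanP; split.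
  apply: zc_mono => v [x [y [Lx [Ly ->]]]]; exists (hform iota G x y); split; last reflexivity.
  apply/rspanP; rewrite -[hform _ _ _ _]addr0 -[hform _ _ _ _]mul1r.
  by apply: rcS; [exists x, y | exact: OE_1 | constructor].
move=> T; apply: zc_idem; apply: zc_mono T => v [a [Ha ->]]; move/rspanP: Ha.
elim=> [|w c y [x1 [y1 [L1 [L2 ->]]]] Oc _ IH]; first by rewrite tr0; constructor.
rewrite trD; apply: zc_add => //; apply: zc_gen; exists (c *: x1), y1.
split; first exact: inLat_scale.
by split => //; rewrite /bform hformZl.
Qed.

Lemma part2 t : normZ z iota B G t <->
  (exists u, trIdeal (trKQ z) (normH z iota B G) u /\ t = 2 * u).
Proof.
rewrite /normZ zspanP; split.
  elim => [|v c y [x [Lx ->]] _ [u [Zu ->]]].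
    by exists 0; split; [apply/zspanP; constructor | rewrite mulr0].
  exists (trKQ z (hform iota G x x) *~ c + u); split.
    apply/zspanP; apply: zcS; last by apply/zspanP.
    exists (hform iota G x x); split => //.
    apply/rspanP; rewrite -[hform _ _ _ _]addr0 -[hform _ _ _ _]mul1r.
    by apply: rcS; [exists x | exact: OK_1 | constructor].
  by rewrite /bform (tr_K _ (fixed_inK _ (hform_sym x x))) mulrDr mulrzAr.
case=> u [/zspanP Zu ->]; elim: Zu => [|v c y [a [Ha ->]] _ IH].
  by rewrite mulr0; constructor.
rewrite mulrDr mulrzAr; move/rspanP: Ha => Ha.
rewrite -(tr_K _ (fixed_inK _ (rc_fixed _ Ha))).
apply: zc_add => //; apply: zc_mulz.
have := zc_imgTr _ _ (rc_zc _ Ha); apply: zc_mono => v' [b [[x [Lx ->]] ->]].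
by exists x.
Qed.

End Gal.

Theorem lemma3p3 (E : splittingFieldType rat) (m : nat) (z : E)
  (iota : gal_of {:E}) (k n : nat) (B : 'M[E]_(k, n)) (G : 'M[E]_n) :
  (2 < m)%N -> m.-primitive_root z -> <<1; z>>%VS = fullv ->
  iota z = z^-1 ->
  G \in unitmx -> map_mx iota G = G^T -> row_full B ->
  (forall t, scaleZ z iota B G t <-> trIdeal (@trEQ E) (scaleH z iota B G) t) /\
  (forall t, normZ z iota B G t <->
     (exists u, trIdeal (trKQ z) (normH z iota B G) u /\ t = 2 * u)).
Proof.
move=> m2 prim gen iz _ hG _; split => t.
  exact: part1.
exact: (@part2 E m z iota m2 prim gen iz k n B G hG t).
Qed.
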